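(* Let $n,k,r$ be integers with $k,r\geq 2$ and $n\geq k+1$. If $H$ is a vertex-$k$-maximal $r$-uniform hypergraph on $n$ vertices, then $|E(H)|\geq \binom{n}{r}-\binom{n-k}{r}$.
   Context: Binomial coefficients satisfy $\binom{a}{b}=0$ when $b>a$. A hypergraph $H=(V,E)$ consists of a finite vertex set $V$ and a set $E$ of non-empty subsets of $V$ (edges); it is $r$-uniform if all edges have exactly $r$ elements. The complement $H^c$ has as edges the $r$-subsets of $V$ not in $E$. A subhypergraph is $H'=(V',E')$ with $V'\subseteq V$, $E'\subseteq E$. $H+e=(V,E\cup\{e\})$ for $e\in E(H^c)$. $H-Y$ is the hypergraph induced on $V\setminus Y$ (keeping edges contained in $V\setminus Y$). Connectedness is defined via paths (alternating sequences of distinct vertices and distinct edges with consecutive vertices in the intermediate edge). A vertex-cut is a set $X$ with $H-X$ disconnected. $\kappa(H)$ is the minimum size of a vertex-cut if one exists, and $|V(H)|-1$ otherwise. $\overline{\kappa}(H)=\max\{\kappa(H'): H'\subseteq H\}$. An $r$-uniform hypergraph $H$ is vertex-$k$-maximal if $\overline{\kappa}(H)\leq k$ but $\overline{\kappa}(H+e)\geq k+1$ for every $e\in E(H^c)$. *)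

(* Defs.v *)
From mathcomp Require Import all_boot.
From Stdlib Require Import ClassicalEpsilon.
Set Implicit Arguments. Unset Strict Implicit. Unset Printing Implicit Defensive.

Section Hyper.
Variable T : finType.

(* A hypergraph is a pair (V, E) with V : {set T}, E : {set {set T}}. *)

Definition is_path (E : {set {set T}}) (u v : T) : Prop :=
  exists (vs : seq T) (es : seq {set T}),
    [/\ size vs = (size es).+1, uniq vs, uniq es,
        all (fun e => e \in E) es &
        [/\ nth u vs 0 = u, last u vs = v &
        forall i, i < size es ->
          (nth u vs i \in nth set0 es i) && (nth u vs i.+1 \in nth set0 es i)]].

Definition connected (V : {set T}) (E : {set {set T}}) : Prop :=
  forall u v, u \in V -> v \in V -> is_path E u v.

Definition connectedb (V : {set T}) (E : {set {set T}}) : bool :=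
  if excluded_middle_informative (connected V E) then true else false.

Definition hdel_V (V : {set T}) (Y : {set T}) : {set T} := V :\: Y.
Definition hdel_E (V : {set T}) (E : {set {set T}}) (Y : {set T}) : {set {set T}} :=
  [set e in E | e \subset V :\: Y].

Definition vcut (V : {set T}) (E : {set {set T}}) (X : {set T}) : bool :=
  (X \subset V) && ~~ connectedb (hdel_V V X) (hdel_E V E X).

Definition kappa (V : {set T}) (E : {set {set T}}) : nat :=
  if [exists X, vcut V E X]
  then \big[minn/#|V|]_(X : {set T} | vcut V E X) #|X|
  else #|V|.-1.

Definition subhyp (V' : {set T}) (E' : {set {set T}}) (V : {set T}) (E : {set {set T}}) : bool :=
  [&& V' \subset V, E' \subset E & [forall e in E', e \subset V']].

Definition kappabar (V : {set T}) (E : {set {set T}}) : nat :=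
  \max_(p : {set T} * {set {set T}} | subhyp p.1 p.2 V E) kappa p.1 p.2.

Definition uniform (r : nat) (E : {set {set T}}) : Prop :=
  forall e, e \in E -> #|e| = r.

Definition vertex_k_maximal (r k : nat) (V : {set T}) (E : {set {set T}}) : Prop :=
  kappabar V E <= k /\
  forall e : {set T}, e \subset V -> #|e| = r -> e \notin E ->
    k.+1 <= kappabar V (e |: E).

End Hyper.

(* Main.v *)
Require Import Defs.
From mathcomp Require Import all_boot.
From Stdlib Require Import Classical ClassicalEpsilon.
From mathcomp Require Import zify.
Set Implicit Arguments. Unset Strict Implicit. Unset Printing Implicit Defensive.

Lemma path_refl (T : finType) (F : {set {set T}}) u : is_path F u u.
Proof.
exists [:: u], [::]; split=> //; split=> //.
Qed.

Lemma conn_small (T : finType) (S : {set T}) F : #|S| <= 1 -> connected S F.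
Proof.
move=> hS u v hu hv.
have -> : v = u by move/card_le1_eqP: hS; apply.
exact: path_refl.
Qed.

Lemma path_stays (T : finType) (F : {set {set T}}) (A B : {set T}) u v :
  A :&: B = set0 -> (forall f, f \in F -> f \subset A \/ f \subset B) ->
  u \in A -> is_path F u v -> v \in A.
Proof.
move=> hAB hF hu [vs [es [hs hvu heu hall [h0 hl hst]]]].
have key : forall i, i < size vs -> nth u vs i \in A.
  elim=> [|i IH] hi; first by rewrite h0.
  have hie : i < size es by rewrite -ltnS -hs.
  have /andP[h1 h2] := hst i hie.
  have hfE : nth set0 es i \in F by apply: (allP hall); rewrite mem_nth.
  case: (hF _ hfE) => hsub; first exact: (subsetP hsub).
  have := IH (ltnW hi) => hA.
  have : nth u vs i \in A :&: B by rewrite inE hA (subsetP hsub).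
  by rewrite hAB inE.
rewrite -hl -nth_last; apply: key; rewrite hs.
by [].
Qed.

Lemma path_ext (T : finType) (F : {set {set T}}) (f : {set T}) u w z :
  is_path F u w -> f \in F -> w \in f -> z \in f -> is_path F u z.
Proof.
move=> [vs [es [hs hvu heu hall [h0 hl hst]]]] hf hw hz.
have vs0 : 0 < size vs by rewrite hs.
have wvs : w \in vs.
  case: vs vs0 hl {hs hvu h0 hst} => // x s _ <- /=; exact: mem_last.
set j := find (mem f) vs.
have hj : j < size vs by rewrite -has_find; apply/hasP; exists w.
have hjf : nth u vs j \in f by apply: (nth_find u (a:=mem f)); apply/hasP; exists w.
have hbef : forall i, i < j -> nth u vs i \notin f.
  by move=> i hi; have := before_find u hi => /= ->.
have hje : j <= size es by rewrite -ltnS -hs.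
set vs1 := take j.+1 vs; set es1 := take j es.
have hs1 : size vs1 = j.+1 by rewrite size_takel.
have he1 : size es1 = j by rewrite size_takel.
have hnv : forall i, i <= j -> nth u vs1 i = nth u vs i.
  by move=> i hi; rewrite nth_take.
have hne : forall i, i < j -> nth set0 es1 i = nth set0 es i.
  by move=> i hi; rewrite nth_take.
have hu1 : uniq vs1 by rewrite take_uniq.
have hue1 : uniq es1 by rewrite take_uniq.
have hall1 : all (fun e => e \in F) es1.
  by move: hall; rewrite -(cat_take_drop j es) all_cat => /andP[].
have h01 : nth u vs1 0 = u by rewrite hnv.
have hst1 : forall i, i < size es1 ->
   (nth u vs1 i \in nth set0 es1 i) && (nth u vs1 i.+1 \in nth set0 es1 i).
  move=> i; rewrite he1 => hi; rewrite hnv ?(ltnW hi) // hnv // hne //.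
  by apply: hst; apply: leq_trans hje.
have hfe1 : f \notin es1.
  apply/negP => hfin.
  have hix : index f es1 < j by rewrite -he1 index_mem.
  have := hst1 _ (leq_trans hix (eq_leq (esym he1))).
  rewrite nth_index // => /andP[h1 _].
  by move: (hbef _ hix); rewrite -hnv ?(ltnW hix) // h1.
case hz1 : (z \in vs1).
  have hiz : index z vs1 <= j by rewrite -ltnS -hs1 index_mem.
  have hzi : nth u vs1 (index z vs1) = z by rewrite nth_index.
  have hij : index z vs1 = j.
    apply/eqP; rewrite eqn_leq hiz /= leqNgt; apply/negP => hlt.
    by move: (hbef _ hlt); rewrite -hnv ?(ltnW hlt) // hzi hz.
  exists vs1, es1; split=> //; first by rewrite hs1 he1.
  split=> //.
  by rewrite -nth_last hs1 /= -hij hzi.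
exists (rcons vs1 z), (rcons es1 f); split.
- by rewrite !size_rcons hs1 he1.
- by rewrite rcons_uniq hz1 hu1.
- by rewrite rcons_uniq hfe1 hue1.
- by rewrite all_rcons hf hall1.
split.
- by rewrite nth_rcons hs1 /= h01.
- by rewrite last_rcons.
move=> i; rewrite size_rcons he1 ltnS => hi.
rewrite !nth_rcons hs1 he1.
case: (ltngtP i j) hi => // [hlt|->] _.
  have h1 : i < j.+1 by apply: ltnW.
  have h2 : i.+1 < j.+1 by [].
  rewrite h1 h2.
  by have := hst1 i; rewrite he1 => ->.
rewrite ltnSn ltnn eqxx hz andbT.
by rewrite hnv.
Qed.

Definition sepr (T : finType) (V : {set T}) (E : {set {set T}}) (X A B : {set T}) :=
  [/\ A :&: B = set0, A :|: B = V :\: X, A != set0, B != set0 &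
   forall f, f \in E -> f \subset V :\: X -> f \subset A \/ f \subset B].

Definition bP (P : Prop) : bool := if excluded_middle_informative P then true else false.
Lemma bPE (P : Prop) : bP P = true <-> P.
Proof. by rewrite /bP; case: excluded_middle_informative. Qed.

Lemma connectedbE (T : finType) (S : {set T}) (F : {set {set T}}) : connectedb S F = true <-> connected S F.
Proof. by rewrite /connectedb; case: excluded_middle_informative. Qed.

Lemma sep_vcut (T : finType) (V : {set T}) (E : {set {set T}}) (X A B : {set T}) :
  X \subset V -> sepr V E X A B -> vcut V E X.
Proof.
move=> hX [hAB hU /set0Pn [a ha] /set0Pn [b hb] hf].
rewrite /vcut hX /=; apply/negP => /connectedbE hc.
have haV : a \in V :\: X by rewrite -hU inE ha.
have hbV : b \in V :\: X by rewrite -hU inE hb orbT.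
have := hc a b haV hbV => hp.
have : b \in A.
  apply: (path_stays hAB _ ha hp) => f; rewrite /hdel_E inE => /andP[h1 h2].
  exact: hf.
move=> hbA.
have : b \in A :&: B by rewrite inE hbA hb.
by rewrite hAB inE.
Qed.

Lemma vcut_sep (T : finType) (V : {set T}) (E : {set {set T}}) (X : {set T}) :
  vcut V E X -> exists A B, sepr V E X A B.
Proof.
rewrite /vcut => /andP[hX hnc].
have hnc' : ~ connected (hdel_V V X) (hdel_E V E X).
  by move=> /connectedbE h; rewrite h in hnc.
have [u [v [hu [hv hnp]]]] : exists u v, u \in V :\: X /\ v \in V :\: X /\
     ~ is_path (hdel_E V E X) u v.
  apply: NNPP => hn; apply: hnc' => u v hu hv.
  apply: NNPP => hp; apply: hn; exists u, v; split=> //.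
set F := hdel_E V E X.
set A := [set w in V :\: X | bP (is_path F u w)].
exists A, ((V :\: X) :\: A); split.
- by apply/setP => w; rewrite !inE; case: bP; case: (w \in X); case: (w \in V).
- apply/setP => w; rewrite !inE.
  by case: bP; case: (w \in X); case: (w \in V); rewrite ?andbF ?orbF ?orbT.
- apply/set0Pn; exists u; rewrite inE hu /=; apply/bPE; exact: path_refl.
- apply/set0Pn; exists v; move: hv; rewrite !inE => /andP[-> ->]; rewrite /= !andbT; apply/negP => /bPE; exact: hnp.
move=> f hfE hfs.
have hfF : f \in F by rewrite /F /hdel_E inE hfE hfs.
case: (boolP [exists w in f, w \in A]).
  move=> /existsP [w /andP[hwf]]; rewrite inE => /andP[_ /bPE hpw].
  left; apply/subsetP => z hz; rewrite inE (subsetP hfs _ hz) /=.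
  apply/bPE; exact: (path_ext hpw hfF hwf hz).
rewrite negb_exists => /forallP hn; right; apply/subsetP => z hz.
rewrite inE (subsetP hfs _ hz) andbT.
by have := hn z; rewrite hz.
Qed.

Lemma bigmin_le_seq (I : eqType) (s : seq I) (P : pred I) (F : I -> nat) m i :
  i \in s -> P i -> \big[minn/m]_(j <- s | P j) F j <= F i.
Proof.
elim: s => // x s IH; rewrite inE big_cons => /orP[/eqP<-|his] hP.
  by rewrite hP geq_minl.
case: (P x); last exact: IH.
by rewrite geq_min IH ?orbT.
Qed.

Lemma bigmin_le (I : finType) (P : pred I) (F : I -> nat) m i :
  P i -> \big[minn/m]_(j | P j) F j <= F i.
Proof. move=> hP; exact: bigmin_le_seq (mem_index_enum i) hP. Qed.

Lemma bigmin_ge (I : finType) (P : pred I) (F : I -> nat) m n :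
  (forall j, P j -> n <= F j) -> n <= m -> n <= \big[minn/m]_(j | P j) F j.
Proof.
move=> hF hm; elim/big_ind: _ => //.
  by move=> x y hx hy; rewrite leq_min hx hy.
Qed.

Lemma vcut_card (T : finType) (V : {set T}) (E : {set {set T}}) (X : {set T}) :
  vcut V E X -> #|X| + 2 <= #|V|.
Proof.
move=> hc; have := hc; rewrite /vcut => /andP[hX hnc].
rewrite leqNgt; apply/negP => hlt.
have hD : #|V :\: X| <= 1.
  rewrite cardsD (setIidPr hX).
  by move: hlt; rewrite addn2 ltnS leq_subLR addn1.
have := conn_small (hdel_E V E X) hD => /connectedbE h.
by rewrite /hdel_V h in hnc.
Qed.

Lemma kappa_le_cut (T : finType) (V : {set T}) (E : {set {set T}}) (X : {set T}) :
  vcut V E X -> kappa V E <= #|X|.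
Proof.
move=> hX; rewrite /kappa; case: ifP => [_|/existsP []]; last by exists X.
exact: bigmin_le.
Qed.

Lemma kappa_le (T : finType) (V : {set T}) (E : {set {set T}}) :
  kappa V E <= #|V|.-1.
Proof.
rewrite /kappa; case: ifP => // /existsP [X hX].
apply: leq_trans (bigmin_le _ _ hX) _.
have := vcut_card hX; rewrite addn2 => h.
by rewrite -ltnS (ltn_predK h) ltnW.
Qed.

Lemma small_cut (T : finType) (V : {set T}) (E : {set {set T}}) k :
  kappa V E <= k -> k.+2 <= #|V| -> exists X, vcut V E X /\ #|X| <= k.
Proof.
move=> hk hV; apply: NNPP => hn.
have hall : forall X, vcut V E X -> k < #|X|.
  move=> X hX; rewrite ltnNge; apply/negP => hXk; apply: hn; exists X; split=> //.
move: hk; rewrite /kappa; case: ifP => _.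
  move=> hk; have : k.+1 <= \big[minn/#|V|]_(X | vcut V E X) #|X|.
    by apply: bigmin_ge => // ; apply: ltnW.
  by rewrite ltnNge hk.
by move: hV; case: #|V| => // m; rewrite ltnS /= => h1 h2; move: (leq_trans h1 h2); rewrite ltnn.
Qed.

Lemma kb_ge (T : finType) (V V' : {set T}) (E E' : {set {set T}}) :
  subhyp V' E' V E -> kappa V' E' <= kappabar V E.
Proof. move=> h; exact: (@leq_bigmax_cond _ _ (fun p => kappa p.1 p.2) (V', E')). Qed.

Lemma kb_ex (T : finType) (V : {set T}) (E : {set {set T}}) k :
  k < kappabar V E -> exists V' E', subhyp V' E' V E /\ k < kappa V' E'.
Proof.
move=> h; apply: NNPP => hn; move: h; rewrite ltnNge => /negP; apply.
apply/bigmax_leqP => [[V' E']] /= hs; rewrite leqNgt; apply/negP => hk.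
by apply: hn; exists V', E'.
Qed.

Lemma kb_le_size (T : finType) (V : {set T}) (E : {set {set T}}) :
  kappabar V E <= #|V|.-1.
Proof.
apply/bigmax_leqP => [[V' E']] /= /and3P[hV _ _].
apply: leq_trans (kappa_le _ _) _.
by rewrite -!subn1 leq_sub2r // subset_leq_card.
Qed.

Lemma sepr_sym (T : finType) (V : {set T}) (E : {set {set T}}) (X A B : {set T}) :
  sepr V E X A B -> sepr V E X B A.
Proof.
move=> [h1 h2 h3 h4 h5]; split=> //; first by rewrite setIC.
  by rewrite setUC.
by move=> f hf hs; case: (h5 f hf hs); auto.
Qed.

Lemma sepr_step (T : finType) (V : {set T}) (E : {set {set T}}) (X A B : {set T}) :
  sepr V E X A B -> 1 < #|A| -> exists a, a \in A /\ sepr V E (a |: X) (A :\ a) B.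
Proof.
move=> [hAB hU hA hB hf] h2.
have [a ha] : exists a, a \in A by apply/set0Pn; rewrite -card_gt0 ltnW.
have haB : a \notin B.
  apply/negP => hb; have : a \in A :&: B by rewrite inE ha hb.
  by rewrite hAB inE.
exists a; split=> //; split.
- apply/setP => w; rewrite !inE; move/setP: (hAB) => /(_ w).
  by rewrite !inE; case: (w \in A); case: (w \in B); rewrite ?andbF.
- apply/setP => w; rewrite !inE; move/setP: (hU) => /(_ w).
  rewrite !inE; case: (eqVneq w a) => [->|hwa] /=.
    by rewrite ha (negbTE haB).
  by [].
- by rewrite -card_gt0; move: h2; rewrite (cardsD1 a A) ha add1n ltnS.
- by [].
move=> f hfE hfs.
have hfs' : f \subset V :\: X.
  apply: subset_trans hfs _; apply/subsetP => w; rewrite !inE.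
  by case: (w == a); case: (w \in X).
case: (hf f hfE hfs') => hsub; last by right.
left; apply/subsetP => w hw; rewrite !inE (subsetP hsub _ hw) andbT.
apply/negP => /eqP ewa; move: (subsetP hfs _ hw); rewrite !inE ewa eqxx.
by [].
Qed.

Lemma sepr_ext (T : finType) (V : {set T}) (E : {set {set T}}) k :
  forall m (X A B : {set T}), k - #|X| = m ->
  sepr V E X A B -> X \subset V -> #|X| <= k -> k.+2 <= #|V| ->
  exists X' A' B', [/\ sepr V E X' A' B', X' \subset V & #|X'| = k].
Proof.
elim=> [|m IH] X A B hm hs hXV hXk hV.
  exists X, A, B; split=> //; apply/eqP; rewrite eqn_leq hXk /=.
  by rewrite -subn_eq0 hm.
have hsz : #|A| + #|B| + #|X| = #|V|.
  case: hs => hAB hU _ _ _.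
  have -> : #|A| + #|B| = #|A :|: B| by rewrite cardsU hAB cards0 subn0.
  rewrite hU cardsD (setIidPr hXV) subnK //.
  exact: subset_leq_card.
have [hA2|hB2] : 1 < #|A| \/ 1 < #|B|.
  case: hs => _ _ hA hB _.
  move: hA hB; rewrite -!card_gt0 => hA hB.
  case: (ltnP 1 #|A|); [by left|]; case: (ltnP 1 #|B|); [by right|].
  move=> hb ha; have : #|V| <= 2 + #|X|.
    by rewrite -hsz; lia.
  move: hV hm; lia.
- have [a [ha hs']] := sepr_step hs hA2.
  have : a \in V :\: X by case: hs => _ <- _ _ _; rewrite inE ha.
  rewrite inE => /andP[haX haV].
  apply: (IH _ _ _ _ hs').
  + by rewrite cardsU1 haX; move: hm; lia.
  + by rewrite subUset sub1set haV hXV.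
  + by rewrite cardsU1 haX; move: hm; lia.
  + by [].
- have [a [ha hs']] := sepr_step (sepr_sym hs) hB2.
  have : a \in V :\: X by case: hs => _ <- _ _ _; rewrite inE ha orbT.
  rewrite inE => /andP[haX haV].
  apply: (IH _ _ _ _ (sepr_sym hs')).
  + by rewrite cardsU1 haX; move: hm; lia.
  + by rewrite subUset sub1set haV hXV.
  + by rewrite cardsU1 haX; move: hm; lia.
  + by [].
Qed.

Definition satset (T : finType) (V : {set T}) (E : {set {set T}}) k r :=
  [set e : {set T} | [&& e \subset V, #|e| == r, e \notin E & k < kappabar V (e |: E)]].

Lemma not_both (T : finType) (V V' : {set T}) (E E' : {set {set T}}) (X A B e : {set T}) k :
  sepr V E X A B -> #|X| <= k ->
  subhyp V' E' V (e |: E) -> k < kappa V' E' ->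
  (e \subset A :|: B -> e \subset A \/ e \subset B) ->
  V' :&: A != set0 -> V' :&: B != set0 -> False.
Proof.
move=> [hAB hU hA hB hf] hXk /and3P[hV'V hE' hEV'] hk he hVA hVB.
have hsep : sepr V' E' (X :&: V') (A :&: V') (B :&: V').
  split.
  - apply/setP => w; move/setP: (hAB) => /(_ w); rewrite !inE.
    by case: (w \in A); case: (w \in B); case: (w \in V').
  - apply/setP => w; move/setP: (hU) => /(_ w); rewrite !inE.
    case hw : (w \in V'); rewrite ?andbF ?orbF //= (subsetP hV'V _ hw) andbT.
    by case: (w \in A); case: (w \in B); case: (w \in X).
  - by rewrite setIC.
  - by rewrite setIC.
  move=> f hfE' hfs.
  have hfV' : f \subset V' by move/forallP: hEV' => /(_ f); rewrite hfE'.
  have hfAB : f \subset A :|: B.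
    rewrite hU; apply/subsetP => w hw; move: (subsetP hfs _ hw).
    by rewrite !inE (subsetP hV'V _ (subsetP hfV' _ hw)) (subsetP hfV' _ hw) !andbT.
  have : f \subset A \/ f \subset B.
    move: (subsetP hE' _ hfE'); rewrite !inE => /orP[/eqP hfe|hfE].
      by rewrite hfe in hfAB *; exact: he.
    by apply: hf => //; rewrite -hU.
  by case=> h; [left|right]; rewrite subsetI h hfV'.
have hY : X :&: V' \subset V' by exact: subsetIr.
have := kappa_le_cut (sep_vcut hY hsep).
have : #|X :&: V'| <= k by apply: leq_trans hXk; apply: subset_leq_card; exact: subsetIl.
move=> h1 h2; move: (leq_trans h2 h1); rewrite leqNgt hk.
by [].
Qed.

Lemma side (T : finType) (V V' : {set T}) (E E' : {set {set T}}) (X A B e : {set T}) k r :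
  sepr V E X A B -> kappabar V E <= k -> e \in satset V E k r ->
  subhyp V' E' V (e |: E) -> k < kappa V' E' -> V' :&: B = set0 ->
  e \in satset (A :|: X) [set f in E | f \subset A :|: X] k r.
Proof.
move=> [hAB hU hA hB hf] hkb hes hsub hk hVB.
move: (hsub) => /and3P[hV'V hE' hEV'].
move: hes; rewrite inE => /and4P[heV her heE hke].
have hV'A : V' \subset A :|: X.
  apply/subsetP => w hw; rewrite inE.
  case hX : (w \in X); rewrite ?orbT //.
  have : w \in V :\: X by rewrite inE hX (subsetP hV'V _ hw).
  rewrite -hU inE => /orP[-> //|hwB].
  have : w \in V' :&: B by rewrite inE hw hwB.
  by rewrite hVB inE.
have heE' : e \in E'.
  apply: NNPP => /negP hn.
  have hs' : subhyp V' E' V E.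
    apply/and3P; split=> //; apply/subsetP => f hfE'.
    move: (subsetP hE' _ hfE'); rewrite !inE => /orP[/eqP hfe|//].
    by rewrite -hfe hfE' in hn.
  by move: (leq_trans (kb_ge hs') hkb); rewrite leqNgt hk.
have heV' : e \subset V' by move/forallP: hEV' => /(_ e); rewrite heE'.
rewrite inE (subset_trans heV' hV'A) her inE (negbTE heE) /=.
apply: leq_trans hk (kb_ge _).
apply/and3P; split=> //.
apply/subsetP => f hfE'; move: (subsetP hE' _ hfE'); rewrite !inE => /orP[->//|hfE].
have hfV' : f \subset V' by move/forallP: hEV' => /(_ f); rewrite hfE'.
by rewrite hfE (subset_trans hfV' hV'A) orbT.
Qed.

Definition draws (T : finType) (S : {set T}) r := [set e : {set T} | e \subset S & #|e| == r].

Lemma kb_mono (T : finType) (V V1 : {set T}) (E E1 : {set {set T}}) :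
  V1 \subset V -> E1 \subset E -> kappabar V1 E1 <= kappabar V E.
Proof.
move=> hV hE; apply/bigmax_leqP => [[V' E']] /= /and3P[h1 h2 h3].
apply: kb_ge; apply/and3P; split=> //; [exact: subset_trans h1 hV|exact: subset_trans h2 hE].
Qed.

Lemma mainG (T : finType) k r : 0 < r -> forall n (V : {set T}) (E : {set {set T}}),
  #|V| <= n -> kappabar V E <= k -> (forall f, f \in E -> f \subset V) ->
  #|satset V E k r| <= 'C(#|V| - k, r).
Proof.
move=> hr; elim=> [|n IH] V E hn hk hEV.
  suff -> : satset V E k r = set0 by rewrite cards0.
  apply/setP => e; rewrite !inE; apply/negbTE; apply/negP => /and4P[_ _ _ hk'].
  have := kb_le_size V (e |: E); lia.
case: (leqP #|V| k.+1) => hsmall.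
  suff -> : satset V E k r = set0 by rewrite cards0.
  apply/setP => e; rewrite !inE; apply/negbTE; apply/negP => /and4P[_ _ _ hk'].
  have := kb_le_size V (e |: E); lia.
have hsub : subhyp V E V E.
  apply/and3P; split=> //; apply/forallP => f; apply/implyP; exact: hEV.
have hkap : kappa V E <= k by apply: leq_trans hk; exact: kb_ge.
have [X0 [hc0 hX0k]] := small_cut hkap hsmall.
have [A0 [B0 hs0]] := vcut_sep hc0.
have hX0V : X0 \subset V by move: hc0 => /andP[].
have [X [A [B [hs hXV hXk]]]] := sepr_ext erefl hs0 hX0V hX0k hsmall.
have hs' := hs; case: hs' => hAB hU hA hB hf.
have hAX : A :&: X = set0.
  apply/setP => w; rewrite !inE; case hw : (w \in A) => //=.
  have : w \in V :\: X by rewrite -hU inE hw.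
  by rewrite !inE => /andP[/negbTE ->].
have hBX : B :&: X = set0.
  apply/setP => w; rewrite !inE; case hw : (w \in B) => //=.
  have : w \in V :\: X by rewrite -hU inE hw orbT.
  by rewrite !inE => /andP[/negbTE ->].
have hcAB : #|A :|: B| = #|A| + #|B| by rewrite cardsU hAB cards0 subn0.
have hcV : #|A| + #|B| + k = #|V|.
  rewrite -hcAB hU cardsD (setIidPr hXV) -hXk subnK //.
  exact: subset_leq_card.
have hcA : #|A :|: X| = #|A| + k by rewrite cardsU hAX cards0 subn0 hXk.
have hcB : #|B :|: X| = #|B| + k by rewrite cardsU hBX cards0 subn0 hXk.
have hA0 : 0 < #|A| by rewrite card_gt0.
have hB0 : 0 < #|B| by rewrite card_gt0.
have hVAV : A :|: X \subset V.
  rewrite subUset hXV andbT; apply/subsetP => w hw.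
  have hw' : w \in V :\: X by rewrite -hU inE hw.
  by move/setDP: hw' => [].
have hVBV : B :|: X \subset V.
  rewrite subUset hXV andbT; apply/subsetP => w hw.
  have hw' : w \in V :\: X by rewrite -hU inE hw orbT.
  by move/setDP: hw' => [].
set EA := [set f in E | f \subset A :|: X].
set EB := [set f in E | f \subset B :|: X].
have hIA : #|satset (A :|: X) EA k r| <= 'C(#|A|, r).
  have := IH (A :|: X) EA; rewrite hcA addnK; apply.
  - lia.
  - by apply: leq_trans hk; apply: kb_mono => //; apply/subsetP => f; rewrite inE => /andP[].
  - by move=> f; rewrite inE => /andP[].
have hIB : #|satset (B :|: X) EB k r| <= 'C(#|B|, r).
  have := IH (B :|: X) EB; rewrite hcB addnK; apply.
  - lia.
  - by apply: leq_trans hk; apply: kb_mono => //; apply/subsetP => f; rewrite inE => /andP[].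
  - by move=> f; rewrite inE => /andP[].
set cross := draws (A :|: B) r :\: (draws A r :|: draws B r).
have hincl : satset V E k r \subset satset (A :|: X) EA k r :|: satset (B :|: X) EB k r :|: cross.
  apply/subsetP => e hes.
  case hc : (e \in cross); first by rewrite inE hc orbT.
  have hes' := hes; move: hes'; rewrite inE => /and4P[heV her heE hke].
  have hnc : e \subset A :|: B -> e \subset A \/ e \subset B.
    move=> heAB; move: hc; rewrite /cross /draws !inE heAB her /=.
    by case: (e \subset A); case: (e \subset B); auto.
  have [V' [E' [hsV hkV]]] := kb_ex hke.
  case: (eqVneq (V' :&: B) set0) => hVB.
    by rewrite !in_setU (side hs hk hes hsV hkV hVB).
  case: (eqVneq (V' :&: A) set0) => hVA.
    by rewrite !in_setU (side (sepr_sym hs) hk hes hsV hkV hVA) orbT.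
  by case: (not_both hs (eq_leq hXk) hsV hkV hnc hVA hVB).
have hdA : #|draws A r| = 'C(#|A|, r) by rewrite cards_draws.
have hdB : #|draws B r| = 'C(#|B|, r) by rewrite cards_draws.
have hdAB : #|draws (A :|: B) r| = 'C(#|V| - k, r) by rewrite cards_draws hcAB -hcV addnK.
have hdI : draws A r :&: draws B r = set0.
  apply/setP => e; rewrite !inE; apply/negbTE; apply/negP => /andP[/andP[h1 /eqP h2] /andP[h3 _]].
  have : e \subset A :&: B by rewrite subsetI h1 h3.
  rewrite hAB subset0 => /eqP he; move: h2; rewrite he cards0 => h; lia.
have hdU : #|draws A r :|: draws B r| = 'C(#|A|, r) + 'C(#|B|, r).
  by rewrite cardsU hdI cards0 subn0 hdA hdB.
have hsubd : draws A r :|: draws B r \subset draws (A :|: B) r.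
  apply/subsetP => e; rewrite !inE => /orP[/andP[h1 ->]|/andP[h1 ->]]; rewrite andbT.
    by apply: subset_trans h1 (subsetUl _ _).
  by apply: subset_trans h1 (subsetUr _ _).
have hcross : 'C(#|A|, r) + 'C(#|B|, r) + #|cross| = 'C(#|V| - k, r).
  by rewrite /cross -hdU -{1}(setIidPr hsubd) cardsID hdAB.
apply: leq_trans (subset_leq_card hincl) _.
rewrite -hcross.
rewrite cardsU; apply: leq_trans (leq_subr _ _) _.
rewrite leq_add2r cardsU; apply: leq_trans (leq_subr _ _) _.
exact: leq_add.
Qed.

Theorem theorem3p2 (T : finType) (n k r : nat) (E : {set {set T}}) :
  2 <= k -> 2 <= r -> k.+1 <= n -> #|T| = n ->
  uniform r E ->
  vertex_k_maximal r k [set: T] E ->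
  'C(n, r) - 'C(n - k, r) <= #|E|.
Proof.
move=> hk2 hr2 hn hT hu [hkb hmax].
have hr : 0 < r by lia.
have hS := @mainG T k r hr #|[set: T]| [set: T] E (leqnn _) hkb (fun f _ => subsetT f).
rewrite cardsT hT in hS.
set D := draws [set: T] r.
have hD : #|D| = 'C(n, r) by rewrite cards_draws cardsT hT.
have hsub : D :\: E \subset satset [set: T] E k r.
  apply/subsetP => e; rewrite !inE => /andP[heE /andP[_ /eqP her]].
  by rewrite subsetT her eqxx heE /=; apply: hmax => //; exact: subsetT.
rewrite leq_subLR addnC -hD -(cardsID E D).
apply: leq_add; first by apply: subset_leq_card; exact: subsetIr.
exact: leq_trans (subset_leq_card hsub) hS.
Qed.
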